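(* Let $\epsilon>0$, $\epsilon_1=\epsilon/(2+\epsilon)$ and $\epsilon_5=\epsilon_1/(4k-2)$. For $u,v,w\in V\setminus D$, let $P=\pi_{G-D}(u,v)\circ\pi_{G-D}(v,w)$. If $P$ is $\epsilon_1$-far away from $V(H)$, then $P$ is an $\epsilon_5$-segment bipath.
   Context: $G=(V,E)$ is an undirected graph with $n\ge3$ vertices and real edge weights in $[1,W]$; shortest paths in every subgraph are assumed unique; $\pi_{G'}(x,y)$ is the shortest $x$-$y$ path in $G'$, $\delta_{G'}$ its length, $\circ$ path concatenation, $|P|$ weighted length, $P[a,b]$ the subpath between $a,b$, $G-R$ the graph with vertex set $R$ deleted. Let $k=\ln n$. For $R\subseteq V$, $S\subseteq V\setminus R$, an $S$-restricted tree cover of $G-R$ is a family $\{T(w):w\in S\}$ of trees, $T(w)$ a subtree of $G-R$ rooted at $w$, such that (i) for all $u\in S$, $v\in V\setminus R$ there is $w\in S$ with $u,v\in V(T(w))$ and $\mathrm{dep}_{T(w)}(u)+\mathrm{dep}_{T(w)}(v)\le(2k-1)\delta_{G-R}(u,v)$ ($\mathrm{dep}_T(x)$ = weighted distance from $x$ to the root); (ii) each vertex lies in at most $kn^{1/k}(\ln n+1)$ trees. A vertex of such a tree $T$ is a trunk vertex if it lies on the $T$-path between two vertices of $S$; $\mathrm{Trunk}(T)$ is the subtree induced by trunk vertices; $\mathrm{pdeg}_T(v)$ is the degree of $v$ in $\mathrm{Trunk}(T)$ (0 if not trunk). Fix an integer $d\ge2$, a constant $c\ge1$, $s=4e d^{c+1}\ln^2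 n+1$; $\mathrm{Hi}(\mathcal{C})$ is the set of vertices of pseudo-degree $>s$ in some tree of a tree cover $\mathcal{C}$. Fixed tree covers: $\mathcal{T}(S)$ ($S$-restricted, of $G$) and $\mathcal{T}_R(S)$ ($(S\setminus R)$-restricted, of $G-R$), $\mathcal{T}_\varnothing(S)=\mathcal{T}(S)$. Hierarchy tree: root $V$; a node $U$ is a leaf if $\mathrm{Hi}(\mathcal{T}(U))=\varnothing$, else it has children $W_1=\mathrm{Hi}(\mathcal{T}(U))$, $W_i=W_{i-1}\cup\mathrm{Hi}(\mathcal{T}_{W_{i-1}}(U))$ ($2\le i\le d$), recursively. Let $D\subseteq V$, $|D|\le d$, and fix a root-to-node path $V=U_1,\dots,U_p$ in the hierarchy tree, $U_{p+1}=\varnothing$, such that every $f\in D$ has pseudo-degree $\le s$ in every tree of $\mathcal{T}:=\bigcup_{i=1}^p\mathcal{T}_{U_{i+1}}(U_i)$. Level $l(v)$ = largest $l$ with $v\in U_l$; $G_i$ = subgraph induced by vertices of level $\le i$. Let $s_0,t_0\in V\setminus D$ be query vertices; for $f\in D$, $T\in\mathcal{T}$ containing $f$, $N_T(f)=\{\mathrm{parent}_T(f)\}\cup(\mathrm{children}_T(f)\cap\mathrm{Trunk}(T))$, $N(f)=\bigcup_TN_T(f)$, $V(H)=(\{s_0,t_0\}\cup\bigcup_{f\in D}N(f))\setminus D$. A path $P$ from $a$ to $b$ is $\eta$-far away from $V(H)$ if there are no $x\in P\setminus\{a,b\}$, $w\in V(H)$ with $\delta_{G-D}(x,w)\le\eta\min\{|P[a,x]|,|P[x,b]|\}$.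 $\eta$-segments of $P=(a=v_0,\dots,v_\ell=b)$: for $1\le i,j<\ell$, $v_i,v_j$ are in the same segment if either both $|P[a,v_i]|,|P[a,v_j]|\le|P|/2$ with equal $\lfloor\log_{1+\eta}|P[a,\cdot]|\rfloor$, or both $|P[v_i,b]|,|P[v_j,b]|<|P|/2$ with equal $\lfloor\log_{1+\eta}|P[\cdot,b]|\rfloor$; classes are contiguous, $a,b$ in no segment. $P$ is an $\eta$-segment bipath if for every $\eta$-segment $P[x,y]$ there are levels $1\le i,j\le p$ and $z\in P[x,y]$ with $P[x,y]=\pi_{G_i}(x,z)\circ\pi_{G_j}(z,y)$. *)

(* Defs.v *)
From HB Require Import structures.
From mathcomp Require Import all_boot all_order all_algebra.
From mathcomp Require Import all_classical all_reals all_analysis.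
Set Implicit Arguments. Unset Strict Implicit. Unset Printing Implicit Defensive.
Import Order.TTheory GRing.Theory Num.Theory.
Local Open Scope ring_scope.

Section Defs.
Variables (R : realType) (V : finType) (e : rel V) (wt : V -> V -> R).

Definition nV : R := (#|V|)%:R.
Definition kk : R := ln nV.

Fixpoint wlen (p : seq V) : R :=
  match p with
  | x :: ((y :: _) as t) => wt x y + wlen t
  | _ => 0
  end.

Definition walk (F : rel V) (X : {set V}) (x y : V) (p : seq V) : Prop :=
  match p with
  | [::] => False
  | x0 :: t => [/\ x0 = x, last x0 t = y, path F x0 t & all (fun z => z \in X) p]
  end.

Definition is_sp (F : rel V) (X : {set V}) (x y : V) (p : seq V) : Prop :=
  walk F X x y p /\ forall q, walk F X x y q -> wlen p <= wlen q.

Definition is_dist (X : {set V}) (x y : V) (d : R) : Prop :=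
  (exists p, walk e X x y p /\ wlen p = d) /\
  (forall p, walk e X x y p -> d <= wlen p).

Record rtree := RTree { troot : V; tverts : {set V}; tpar : V -> V }.

Definition valid_tree (Rm : {set V}) (r : V) (T : rtree) : Prop :=
  [/\ troot T = r, r \in tverts T, tpar T r = r & tverts T \subset ~: Rm] /\
  [/\ (forall x, x \in tverts T -> x != r -> tpar T x \in tverts T /\ e x (tpar T x))
    & (forall x, x \in tverts T -> exists m, iter m (tpar T) x = r)].

Definition dep (T : rtree) (x : V) : R :=
  \sum_(m < #|V|) (if iter m (tpar T) x != troot T
                   then wt (iter m (tpar T) x) (iter m.+1 (tpar T) x) else 0).

Definition anc (T : rtree) (a v : V) : bool :=
  [exists m : 'I_#|V|, iter m (tpar T) a == v].

(* v lies on the T-path between a and b *)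
Definition on_tpath (T : rtree) (a b v : V) : bool :=
  (anc T a v || anc T b v) && [forall c, (anc T a c && anc T b c) ==> anc T v c].

Definition trunk (S : {set V}) (T : rtree) (v : V) : bool :=
  (v \in tverts T) &&
  [exists a, exists b, [&& a \in S, b \in S, a \in tverts T, b \in tverts T
                         & on_tpath T a b v]].

Definition tadj (T : rtree) (x y : V) : bool :=
  [&& x \in tverts T, y \in tverts T &
      ((x != troot T) && (tpar T x == y)) || ((y != troot T) && (tpar T y == x))].

Definition pdeg (S : {set V}) (T : rtree) (v : V) : nat :=
  if trunk S T v then #|[set y | tadj T v y && trunk S T y]| else 0.

Definition NT (S : {set V}) (T : rtree) (f : V) : {set V} :=
  [set y | (f != troot T) && (y == tpar T f)] :|:
  [set y | [&& y \in tverts T, y != troot T, tpar T y == f & trunk S T y]].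

Definition tree_cover (Rm S : {set V}) (C : V -> rtree) : Prop :=
  [/\ S \subset ~: Rm,
      (forall r, r \in S -> valid_tree Rm r (C r)),
      (forall u v, u \in S -> v \in ~: Rm -> (exists p, walk e (~: Rm) u v p) ->
         exists2 r, r \in S &
           [/\ u \in tverts (C r), v \in tverts (C r) &
               forall d, is_dist (~: Rm) u v d ->
                 dep (C r) u + dep (C r) v <= (2 * kk - 1) * d])
    & (forall v, (#|[set r in S | v \in tverts (C r)]|)%:R
                 <= kk * powR nV (kk^-1) * (ln nV + 1))].

Definition s_par (d : nat) (c : R) : R :=
  4 * expR 1 * powR (d%:R) (c + 1) * (ln nV) ^+ 2 + 1.

Definition Hi (s : R) (S : {set V}) (C : V -> rtree) : {set V} :=
  [set v | [exists r in S, s < (pdeg S (C r) v)%:R]].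

(* TCR Rm S = the fixed tree cover T_Rm(S), which is (S \ Rm)-restricted;
   T(S) = TCR finset.set0 S. *)
Definition HiT (s : R) (TCR : {set V} -> {set V} -> V -> rtree) (Rm U : {set V}) :=
  Hi s (U :\: Rm) (TCR Rm U).

(* Wch U i = W_{i+1} *)
Fixpoint Wch (s : R) TCR (U : {set V}) (i : nat) : {set V} :=
  match i with
  | 0 => HiT s TCR finset.set0 U
  | i'.+1 => Wch s TCR U i' :|: HiT s TCR (Wch s TCR U i') U
  end.

Definition hchild (s : R) (d : nat) TCR (U U' : {set V}) : Prop :=
  HiT s TCR finset.set0 U != finset.set0 /\ exists2 i, (i < d)%N & U' = Wch s TCR U i.

Definition hier_path (s : R) (d : nat) TCR (Us : seq {set V}) : Prop :=
  [/\ Us != [::], nth finset.set0 Us 0 = [set: V] &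
      forall j, (j.+1 < size Us)%N -> hchild s d TCR (nth finset.set0 Us j) (nth finset.set0 Us j.+1)].

(* restriction set of the j-th (0-indexed) family T_{U_{j+2}}(U_{j+1}) *)
Definition Sj (Us : seq {set V}) (j : nat) : {set V} :=
  nth finset.set0 Us j :\: nth finset.set0 Us j.+1.
Definition Tj TCR (Us : seq {set V}) (j : nat) : V -> rtree :=
  TCR (nth finset.set0 Us j.+1) (nth finset.set0 Us j).

Definition VH TCR (Us : seq {set V}) (D : {set V}) (s0 t0 : V) : {set V} :=
  ([set s0; t0] :|:
   [set y | [exists f in D, exists j : 'I_(size Us), exists r in Sj Us j,
               (f \in tverts (Tj TCR Us j r)) && (y \in NT (Sj Us j) (Tj TCR Us j r) f)]])
  :\: D.

(* vertex set of G_i: vertices of level <= i (levels 1..p) *)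
Definition Gset (Us : seq {set V}) (i : nat) : {set V} :=
  [set v | [forall j : 'I_(size Us), (i <= j)%N ==> (v \notin nth finset.set0 Us j)]].

Definition lenA (P : seq V) (i : nat) : R := wlen (take i.+1 P).
Definition lenB (P : seq V) (i : nat) : R := wlen (drop i P).
Definition logb (eta x : R) : R := ln x / ln (1 + eta).

Definition far_away (eta : R) (X : {set V}) (D : {set V}) (P : seq V) : Prop :=
  forall x0 : V, forall i, (0 < i)%N -> (i < (size P).-1)%N ->
    nth x0 P i != nth x0 P 0 -> nth x0 P i != last x0 P ->
    forall y, y \in X ->
      ~ exists dd, is_dist (~: D) (nth x0 P i) y dd /\
                   dd <= eta * Num.min (lenA P i) (lenB P i).

Definition same_seg (eta : R) (P : seq V) (i j : nat) : Prop :=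
  [/\ (0 < i)%N, (i < (size P).-1)%N, (0 < j)%N, (j < (size P).-1)%N &
     ((lenA P i <= wlen P / 2 /\ lenA P j <= wlen P / 2 /\
        Num.floor (logb eta (lenA P i)) = Num.floor (logb eta (lenA P j)))
  \/ (lenB P i < wlen P / 2 /\ lenB P j < wlen P / 2 /\
        Num.floor (logb eta (lenB P i)) = Num.floor (logb eta (lenB P j))))].

(* P is an eta-segment bipath (w.r.t. the levels 1..size Us) :
   for every eta-segment P[v_i, v_j] (i = first, j = last position of the class) *)
Definition seg_bipath (eta : R) (Us : seq {set V}) (P : seq V) : Prop :=
  forall x0 : V, forall i j, same_seg eta P i j ->
    (forall m, same_seg eta P i m -> (i <= m <= j)%N) ->
    exists li lj m, [/\ (1 <= li <= size Us)%N, (1 <= lj <= size Us)%N,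
      (i <= m <= j)%N &
      exists p1 p2, [/\ is_sp e (Gset Us li) (nth x0 P i) (nth x0 P m) p1,
                        is_sp e (Gset Us lj) (nth x0 P m) (nth x0 P j) p2 &
                        take (j - i).+1 (drop i P) = p1 ++ behead p2]].

End Defs.

(* Main.v *)
Require Import Defs.
From HB Require Import structures.
From mathcomp Require Import all_boot all_order all_algebra.
From mathcomp Require Import all_classical all_reals all_analysis.
From mathcomp Require Import zify lra.
Import Order.TTheory GRing.Theory Num.Theory.
Local Open Scope ring_scope.
Set Implicit Arguments. Unset Strict Implicit. Unset Printing Implicit Defensive.

Ltac prune := repeat match goal with
 | H : is_true (_ \in _) |- _ => clear H
 | H : {subset _ <= _} |- _ => clear H
 | H : @eq (Finite.sort _) _ _ |- _ => clear H
 | H : is_true (_ != [::]) |- _ => clear H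
 | H : forall _, _ |- _ => clear H
 end.
Ltac slia := prune; lia.

Section Walks.
Variables (R : realType) (V : finType) (wt : V -> V -> R).
Hypothesis Hw_sym : forall x y, wt x y = wt y x.
Implicit Types (F : rel V) (X Y : {set V}) (p q s : seq V).

Definition edges (F : rel V) (p : seq V) :=
  forall x0 k, (k.+1 < size p)%N -> F (nth x0 p k) (nth x0 p k.+1).

Lemma edges_path F x t : edges F (x :: t) <-> path F x t.
Proof.
split.
  move=> H; apply/(pathP x) => i Hi; exact: (H x i).
move=> /(pathP x) H x0 k Hk.
rewrite (set_nth_default x x0 (ltnW Hk)) (set_nth_default x x0 Hk) /=; exact: H.
Qed.

Lemma walkE F X x y p : walk F X x y p <->
  [/\ p != [::], head x p = x, last x p = y, edges F p & {subset p <= X}].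
Proof.
case: p => [|x0 t] /=.
  by split=> // -[].
split.
  move=> [-> <- Hp Ha]; split => //; first exact/edges_path.
  move=> z Hz; exact: (@allP _ (fun w => w \in X) (x :: t) Ha z Hz).
move=> [_ Ex Ey He Hs]; split => //; first exact/edges_path.
apply/andP; split; first by apply: Hs; rewrite inE eqxx.
by apply/allP => z Hz; apply: Hs; rewrite inE Hz orbT.
Qed.

Lemma edges_take F p n : edges F p -> edges F (take n p).
Proof.
move=> H x0 k Hk; rewrite size_take in Hk.
case: (ltnP n (size p)) => Hn.
  rewrite Hn in Hk; rewrite !nth_take; [apply: H; lia | lia | lia].
rewrite (leq_gtF Hn) in Hk.
by rewrite take_oversize //; apply: H.
Qed.

Lemma edges_drop F p n : edges F p -> edges F (drop n p).
Proof.
move=> H x0 k Hk; rewrite size_drop in Hk.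
rewrite !nth_drop addnS; apply: H; lia.
Qed.

Lemma edges_rev F p : symmetric F -> edges F p -> edges F (rev p).
Proof.
move=> Hs H x0 k Hk; rewrite size_rev in Hk.
rewrite !nth_rev; try lia.
have -> : (size p - k.+1 = (size p - k.+2).+1)%N by lia.
rewrite Hs; apply: H; lia.
Qed.

Lemma nth_lastD (p : seq V) z a : p != [::] -> nth z p (size p).-1 = last a p.
Proof. by case: p => [|b p] //= _; rewrite -[nth z (b :: p) _]/(nth z (b :: p) (size (b :: p)).-1) nth_last. Qed.

Lemma edges_glue F p a q : edges F p -> edges F (a :: q) -> p != [::] ->
  last a p = a -> edges F (p ++ q).
Proof.
move=> Hp Hq Hp0 Hl z k Hk; rewrite size_cat in Hk.
have Hsp : (0 < size p)%N by case: p Hp0 {Hp Hl Hk}.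
case: (ltnP k.+1 (size p)) => Hk1.
  by rewrite !nth_cat Hk1 (ltnW Hk1); apply: Hp.
case: (ltnP k (size p)) => Hk2.
  have Ek : k = (size p).-1 by lia.
  rewrite nth_cat Hk2 nth_cat ltnNge Hk1 /= Ek (nth_lastD z a Hp0) Hl.
  have -> : ((size p).-1.+1 - size p = 0)%N by lia.
  have := Hq z 0%N; rewrite /=; apply; lia.
rewrite !nth_cat (leq_gtF Hk2) (leq_gtF Hk1).
have -> : (k.+1 - size p = (k - size p).+1)%N by lia.
have := Hq z (k - size p).+1%N; rewrite /=; apply; lia.
Qed.

Lemma wlen_cons2 x y s : wlen wt (x :: y :: s) = wt x y + wlen wt (y :: s).
Proof. by []. Qed.

Lemma wlen_cat x p q : wlen wt (x :: p ++ q) = wlen wt (x :: p) + wlen wt (last x p :: q).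
Proof.
elim: p x => [|y p IH] x; first by rewrite /= add0r.
by rewrite cat_cons !wlen_cons2 IH addrA.
Qed.

Lemma wlen_glue p q x0 : p != [::] -> q != [::] -> last x0 p = head x0 q ->
  wlen wt (p ++ behead q) = wlen wt p + wlen wt q.
Proof.
case: p => [|x p] // _; case: q => [|y q] // _ /= Hl.
by rewrite -/(wlen wt (x :: p ++ q)) wlen_cat Hl.
Qed.

Lemma wlen_rcons x p z : wlen wt (rcons (x :: p) z) = wlen wt (x :: p) + wt (last x p) z.
Proof. by rewrite rcons_cons -cats1 wlen_cat /= addr0. Qed.

Lemma wlen_rev p : wlen wt (rev p) = wlen wt p.
Proof.
elim: p => [|x p IH] //.
case: p IH => [|y p] IH //.
rewrite rev_cons.
have : rev (y :: p) != [::] by rewrite -size_eq0 size_rev.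
case E: (rev (y :: p)) => [|z r] // _.
rewrite wlen_rcons -E IH.
have -> : last z r = y.
  have : last x (rev (y :: p)) = y by rewrite rev_cons last_rcons.
  by rewrite E.
by rewrite /= Hw_sym addrC.
Qed.

Lemma wlen1 x : wlen wt [:: x] = 0. Proof. by []. Qed.

Lemma wlen_split s t : (t < size s)%N -> wlen wt s = wlen wt (take t.+1 s) + wlen wt (drop t s).
Proof.
elim: s t => [|x s IH] t Ht //.
case: t Ht => [|t] Ht.
  have -> : take 1 (x :: s) = [:: x] by rewrite /= take0.
  by rewrite drop0 wlen1 add0r.
case: s IH Ht => [|y s] IH Ht //.
rewrite [take _ _]/= [drop _ _]/= -/(take t.+1 (y :: s)) !wlen_cons2 (IH t) //.
rewrite addrA; congr (_ + _ + _).
Qed.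

Lemma walk_glue F X x y z p q : walk F X x y p -> walk F X y z q ->
  walk F X x z (p ++ behead q).
Proof.
move=> /walkE [Hp0 Hph Hpl Hpe Hps] /walkE [Hq0 Hqh Hql Hqe Hqs].
case: q Hq0 Hqh Hql Hqe Hqs => [|b q] // _ /= Eb Hql Hqe Hqs; subst b.
apply/walkE; split.
- by case: p Hp0 {Hph Hpl Hpe Hps}.
- by case: p Hp0 Hph {Hpl Hpe Hps}.
- rewrite last_cat; case: q Hql {Hqe Hqs} => [|c q] //=; by rewrite Hpl.
- by apply: (edges_glue Hpe Hqe Hp0); rewrite -Hpl; case: p Hp0 {Hph Hpl Hpe Hps}.
- move=> w; rewrite mem_cat => /orP [H|H]; [exact: Hps | apply: Hqs; by rewrite inE H orbT].
Qed.

Lemma wlen_glue_walk F X x y z p q : walk F X x y p -> walk F X y z q ->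
  wlen wt (p ++ behead q) = wlen wt p + wlen wt q.
Proof.
move=> /walkE [Hp0 Hph Hpl Hpe Hps] /walkE [Hq0 Hqh Hql Hqe Hqs].
apply: (@wlen_glue _ _ y Hp0 Hq0).
rewrite Hqh; case: p Hp0 Hpl {Hph Hpe Hps} => [|c p] //= _ <-.
Qed.

Lemma walk_rev F X x y p : symmetric F -> walk F X x y p -> walk F X y x (rev p).
Proof.
move=> Hs /walkE [Hp0 Hph Hpl Hpe Hps]; apply/walkE; split.
- by rewrite -size_eq0 size_rev size_eq0.
- case: p Hp0 Hph Hpl {Hpe Hps} => [|c p] //= _ _ <-.
  case/lastP: p => [|p d] //.
  by rewrite -rcons_cons rev_rcons last_rcons.
- by case: p Hp0 Hph {Hpl Hpe Hps} => [|c p] //= _ <-; rewrite rev_cons last_rcons.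
- exact: edges_rev.
- by move=> w; rewrite mem_rev; apply: Hps.
Qed.

Lemma walk_mono F X Y x y p : {subset X <= Y} -> walk F X x y p -> walk F Y x y p.
Proof.
move=> HXY /walkE [Hp0 Hph Hpl Hpe Hps]; apply/walkE; split => // w Hw.
exact/HXY/Hps.
Qed.

Lemma walk_sub F X x y s a b : walk F X x y s -> (a <= b < size s)%N ->
  walk F X (nth x s a) (nth x s b) (take (b - a).+1 (drop a s)).
Proof.
move=> /walkE [Hp0 Hph Hpl Hpe Hps] /andP [Hab Hb]; apply/walkE; split.
- rewrite -size_eq0 -lt0n size_take size_drop. set n := size s in Hb *. case: ifP => _; lia.
- rewrite -nth0 nth_take // nth_drop addn0.
  by apply: set_nth_default; lia.
- rewrite -(nth_lastD (nth x s a)); last by rewrite -size_eq0 -lt0n size_take size_drop; set n := size s in Hb *; case: ifP => _; lia.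
  rewrite size_take size_drop; set n := size s in Hb *.
  have -> : (if (b - a).+1 < n - a then (b - a).+1 else n - a)%N.-1 = (b - a)%N.
    by case: ifP => Hc; rewrite -subn1; slia.
  rewrite nth_take // nth_drop (set_nth_default x) //; last lia.
  congr nth; lia.
- exact/edges_take/edges_drop.
- by move=> w /mem_take /mem_drop; apply: Hps.
Qed.

Lemma wlen_piece s a b : (a <= b < size s)%N ->
  wlen wt (take (b - a).+1 (drop a s)) = wlen wt (take b.+1 s) - wlen wt (take a.+1 s).
Proof.
move=> /andP [Hab Hb].
have E1 := wlen_split (s := take b.+1 s) (t := a).
rewrite size_take in E1.
have Hs : (b < size s)%N := Hb.
rewrite E1; last by case: ifP => _; lia.
rewrite take_takel; last lia.
rewrite take_drop.
have -> : ((b - a).+1 + a = b.+1)%N by lia.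
by rewrite addrC addKr.
Qed.

End Walks.

Section WalksE.
Variables (R : realType) (V : finType) (e : rel V) (wt : V -> V -> R).
Hypothesis Hw : forall x y, e x y -> 1 <= wt x y.
Implicit Types (X Y : {set V}) (p q s : seq V).

Lemma path_wlen x t : path e x t -> (size t)%:R <= wlen wt (x :: t).
Proof.
elim: t x => [|y t IH] x /=; first by [].
move=> /andP [Hxy Hp]; rewrite -/(wlen wt (y :: t)).
have := IH y Hp; have := Hw Hxy; rewrite -addn1 natrD; lra.
Qed.

Lemma walk_wlen X x y p : walk e X x y p -> (size p)%:R <= wlen wt p + 1 /\ 0 <= wlen wt p.
Proof.
case: p => [|z t]; first by move=> [].
move=> [_ _ Hp _]; have := path_wlen Hp.
have : 0 <= (size t)%:R :> R by [].
rewrite -[size (z :: t)]/((size t).+1) -addn1 natrD; lra.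
Qed.

Lemma sp_sub X x y s a b : is_sp wt e X x y s -> (a <= b < size s)%N ->
  forall q, walk e X (nth x s a) (nth x s b) q ->
  wlen wt (take (b - a).+1 (drop a s)) <= wlen wt q.
Proof.
move=> [Hs Hmin] /andP [Hab Hb] q Hq.
have Ha : (a < size s)%N by apply: leq_ltn_trans Hb.
have W1 : walk e X x (nth x s a) (take a.+1 s).
  have := walk_sub Hs (a := 0) (b := a); rewrite subn0 drop0.
  have -> : nth x s 0 = x by have /walkE [_ Hh _ _ _] := Hs; rewrite nth0.
  by apply; rewrite Ha.
have W2 : walk e X (nth x s b) y (drop b s).
  have := walk_sub Hs (a := b) (b := (size s).-1).
  have -> : nth x s (size s).-1 = y.
    by have /walkE [_ _ Hl _ _] := Hs; rewrite nth_last.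
  rewrite take_oversize; last by rewrite size_drop; set n := size s in Hb *; lia.
  apply; set n := size s in Hb *; apply/andP; split; lia.
have W3 := walk_glue (walk_glue W1 Hq) W2.
have := Hmin _ W3.
rewrite (wlen_glue_walk wt (walk_glue W1 Hq) W2) (wlen_glue_walk wt W1 Hq).
rewrite (wlen_split wt Ha) (@wlen_split _ _ wt (drop a s) (b - a)); last first.
  by rewrite size_drop; set n := size s in Hb *; lia.
rewrite drop_drop subnK //; lra.
Qed.

Fixpoint allseq (n : nat) : seq (seq V) :=
  if n is n'.+1 then [::] :: [seq x :: t | x <- enum V, t <- allseq n'] else [:: [::]].

Lemma allseqP n s : (size s <= n)%N -> s \in allseq n.
Proof.
elim: n s => [|n IH] [|x s] //= Hs.
rewrite inE; apply/orP; right.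
apply: (allpairs_f (fun x t => x :: t)); first by rewrite mem_enum.
exact: IH.
Qed.

Lemma list_min (T : eqType) (l : seq T) (P : T -> Prop) (f : T -> R) :
  (exists x, x \in l /\ P x) ->
  exists x, [/\ x \in l, P x & forall y, y \in l -> P y -> f x <= f y].
Proof.
elim: l => [|a l IH]; first by case=> x [].
move=> Hex0.
case: (pselect (exists x, x \in l /\ P x)) => [Hex|Hno].
  have [m [Hm Pm Hmin]] := IH Hex.
  case: (pselect (P a /\ f a <= f m)) => [[Pa Ha]|Hn].
    exists a; split => //; first by rewrite inE eqxx.
    move=> y; rewrite inE => /orP [/eqP -> //|Hy] Py.
    by apply: le_trans Ha (Hmin _ Hy Py).
  exists m; split => //; first by rewrite inE Hm orbT.
  move=> y; rewrite inE => /orP [/eqP ->|Hy] Py; last exact: Hmin.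
  by apply: ltW; rewrite ltNge; apply/negP => H; apply: Hn.
case: (pselect (P a)) => [Pa|nPa].
  exists a; split => //; first by rewrite inE eqxx.
  move=> y; rewrite inE => /orP [/eqP -> //|Hy] Py.
  by exfalso; apply: Hno; exists y.
exfalso; case: Hex0 => z [Hz Pz]; move: Hz; rewrite inE => /orP [/eqP Ez|Hz].
  by apply: nPa; rewrite -Ez.
by apply: Hno; exists z.
Qed.

Lemma exists_dist X x y p0 : walk e X x y p0 ->
  exists d, is_dist e wt X x y d /\ d <= wlen wt p0.
Proof.
move=> Hp0.
have [_ H0] := walk_wlen Hp0.
set N := Num.Def.archi_bound (wlen wt p0).
have HN := archi_boundP H0.
have Hsz : forall q, walk e X x y q -> wlen wt q <= wlen wt p0 -> (size q <= N.+1)%N.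
  move=> q Hq Hle; have [H1 _] := walk_wlen Hq.
  rewrite -(ler_nat R); apply: le_trans H1 _.
  rewrite -addn1 natrD lerD2r; apply: ltW; exact: le_lt_trans Hle HN.
have [m [Hm Pm Hmin]] := list_min (wlen wt) (l := allseq N.+1) (P := walk e X x y)
  (ex_intro _ p0 (conj (allseqP (Hsz _ Hp0 (lexx _))) Hp0)).
exists (wlen wt m); split; last exact: Hmin _ (allseqP (Hsz _ Hp0 (lexx _))) Hp0.
split; first by exists m.
move=> q Hq.
case: (lerP (wlen wt q) (wlen wt p0)) => Hle.
  exact: Hmin _ (allseqP (Hsz _ Hq Hle)) Hq.
apply: ltW; apply: le_lt_trans Hle.
exact: Hmin _ (allseqP (Hsz _ Hp0 (lexx _))) Hp0.
Qed.

End WalksE.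

Section Up.
Variables (R : realType) (V : finType) (wt : V -> V -> R).

Fixpoint upw (f : V -> V) (x : V) (n : nat) : seq V :=
  if n is n'.+1 then x :: upw f (f x) n' else [:: x].

Lemma size_upw f x n : size (upw f x n) = n.+1.
Proof. by elim: n x => [|n IH] x //=; rewrite IH. Qed.

Lemma nth_upw f x n m z : (m <= n)%N -> nth z (upw f x n) m = iter m f x.
Proof.
elim: n x m => [|n IH] x [|m] //= Hm.
by rewrite IH // -iterS iterSr.
Qed.

Lemma mem_upw f x n y : y \in upw f x n -> exists2 m, (m <= n)%N & y = iter m f x.
Proof.
move=> Hy.
have Hi : (index y (upw f x n) < n.+1)%N by rewrite -(size_upw f x n) index_mem.
exists (index y (upw f x n)) => //.
by rewrite -(nth_upw f x x (ltnSE Hi)) nth_index.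
Qed.

Lemma upw_split f x n1 n2 :
  upw f x (n1 + n2) = upw f x n1 ++ behead (upw f (iter n1 f x) n2).
Proof.
elim: n1 x => [|n1 IH] x /=; first by case: n2.
by rewrite IH -iterSr.
Qed.

Lemma upw_wlen f x n : wlen wt (upw f x n) = \sum_(m < n) wt (iter m f x) (iter m.+1 f x).
Proof.
elim: n x => [|n IH] x; first by rewrite big_ord0.
rewrite big_ord_recl.
rewrite -[upw f x n.+1]/(x :: upw f (f x) n).
have E : upw f (f x) n = f x :: behead (upw f (f x) n) by case: n {IH}.
rewrite E wlen_cons2 -E IH; congr (_ + _).
by apply: eq_bigr => i _; rewrite lift0 -!iterSr.
Qed.

Lemma upw_walk (e : rel V) (X : {set V}) f x n :
  (forall m, (m < n)%N -> e (iter m f x) (iter m.+1 f x)) ->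
  (forall m, (m <= n)%N -> iter m f x \in X) ->
  walk e X x (iter n f x) (upw f x n).
Proof.
move=> He HX; apply/walkE; split.
- by rewrite -size_eq0 size_upw.
- by case: n {He HX}.
- by rewrite -(nth_lastD x); [rewrite size_upw nth_upw | rewrite -size_eq0 size_upw].
- move=> z k Hk; rewrite size_upw in Hk.
  rewrite !nth_upw //; [exact: He | exact: ltnW].
- move=> y /mem_upw [m Hm ->]; exact: HX.
Qed.

End Up.

Section Tree.
Variables (R : realType) (V : finType) (e : rel V) (wt : V -> V -> R).
Hypothesis Hw : forall x y, e x y -> 1 <= wt x y.
Variables (Rm : {set V}) (r : V) (T : rtree V).
Hypothesis HT : valid_tree e Rm r T.
Hypothesis Hsym : symmetric e.
Hypothesis Hw_sym : forall x y, wt x y = wt y x.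
Local Notation par := (tpar T).

Lemma T_root : troot T = r. Proof. by case: HT => [[]]. Qed.
Lemma T_rin : r \in tverts T. Proof. by case: HT => [[]]. Qed.
Lemma T_par_r : par r = r. Proof. by case: HT => [[]]. Qed.
Lemma T_sub : tverts T \subset ~: Rm. Proof. by case: HT => [[]]. Qed.
Lemma T_step x : x \in tverts T -> x != r -> par x \in tverts T /\ e x (par x).
Proof. by case: HT => _ [H _]; apply: H. Qed.
Lemma T_reach x : x \in tverts T -> exists m, iter m par x = r.
Proof. by case: HT => _ [_ H]; apply: H. Qed.

Lemma iter_r m : iter m par r = r.
Proof. by elim: m => //= m ->; rewrite T_par_r. Qed.

Lemma iter_in x m : x \in tverts T -> iter m par x \in tverts T.
Proof.
move=> Hx; elim: m => //= m IH.
case: (eqVneq (iter m par x) r) => [->|Hne]; first by rewrite T_par_r T_rin.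
by case: (T_step IH Hne).
Qed.

Lemma iter_ge x h m : iter h par x = r -> (h <= m)%N -> iter m par x = r.
Proof. by move=> Hh Hm; rewrite -(subnK Hm) iterD Hh iter_r. Qed.

Definition hspec x h := [/\ (h < #|V|)%N, iter h par x = r &
  forall m, (m < h)%N -> iter m par x != r].

Lemma height x : x \in tverts T -> exists h, hspec x h.
Proof.
move=> Hx.
have Ex := T_reach Hx.
have : exists m, iter m par x == r by case: Ex => m Hm; exists m; rewrite Hm.
case/ex_minnP => h /eqP Hh Hmin.
have Hlt : forall m, (m < h)%N -> iter m par x != r.
  move=> m Hm; apply/negP => /eqP Hm'.
  by have := Hmin m; rewrite Hm' eqxx => /(_ isT); rewrite leqNgt Hm.
exists h; split => //.
have Hinj : injective (fun i : 'I_h.+1 => iter i par x).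
  move=> i j Hij; apply/val_inj => /=.
  have key : forall a b : nat, (a < b <= h)%N -> iter a par x = iter b par x -> False.
    move=> a b /andP [Hab Hbh] E.
    have Hk : forall k, iter (a + k) par x = iter (b + k) par x.
      by elim=> [|k IHk]; rewrite ?addn0 // !addnS !iterS IHk.
    have := Hk (h - b)%N; rewrite subnKC // Hh => E2.
    have Hc : (a + (h - b) < h)%N by lia.
    by have := Hlt _ Hc; rewrite E2 eqxx.
  case: (ltngtP i j) => // Hc; exfalso.
  - by apply: (key i j) => //; rewrite Hc /= -ltnS ltn_ord.
  - by apply: (key j i) => //; rewrite Hc /= -ltnS ltn_ord.
have := leq_card _ Hinj; rewrite card_ord.
by [].
Qed.

Lemma hspec_in x h m : hspec x h -> (iter m par x != r) = (m < h)%N.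
Proof.
move=> [_ Hh Hlt]; case: (ltnP m h) => Hm; first exact: Hlt.
by rewrite (iter_ge Hh Hm) eqxx.
Qed.

Lemma dep_eq x h : hspec x h -> dep wt T x = wlen wt (upw par x h).
Proof.
move=> Hs; have [Hh _ _] := Hs.
rewrite /dep upw_wlen T_root.
rewrite (big_ord_widen _ (fun m => wt (iter m par x) (iter m.+1 par x)) (ltnW Hh)).
rewrite [RHS]big_mkcond /=; apply: eq_bigr => i _.
by rewrite (hspec_in _ Hs).
Qed.

Lemma upT_walk (X : {set V}) x n : x \in tverts T -> (forall m, (m < n)%N -> iter m par x != r) ->
  (forall m, (m <= n)%N -> iter m par x \in X) ->
  walk e X x (iter n par x) (upw par x n).
Proof.
move=> Hx Hn HX; apply: upw_walk => // m Hm.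
by have [_ ] := T_step (iter_in m Hx) (Hn m Hm); rewrite iterS.
Qed.

Lemma up_le x h n : x \in tverts T -> hspec x h -> (n <= h)%N ->
  [/\ 0 <= wlen wt (upw par x n), wlen wt (upw par x n) <= wlen wt (upw par x h)
    & wlen wt (upw par (iter n par x) (h - n)) <= wlen wt (upw par x h)].
Proof.
move=> Hx Hs Hn.
have Wa : walk e (tverts T) x (iter n par x) (upw par x n).
  apply: upT_walk => // m Hm; [rewrite (hspec_in _ Hs); lia | exact: iter_in].
have Wb : walk e (tverts T) (iter n par x) (iter (h - n) par (iter n par x))
             (upw par (iter n par x) (h - n)).
  apply: upT_walk; first exact: iter_in.
    by move=> m Hm; rewrite -iterD (hspec_in _ Hs); lia.
  by move=> m _; rewrite -iterD; apply: iter_in.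
have E : wlen wt (upw par x h) = wlen wt (upw par x n) + wlen wt (upw par (iter n par x) (h - n)).
  by rewrite -(wlen_glue_walk wt Wa Wb) -upw_split subnKC.
have [_ Ha] := walk_wlen Hw Wa; have [_ Hb] := walk_wlen Hw Wb.
rewrite E; split; lra.
Qed.

Lemma tree_exit (S D : {set V}) w f :
  r \in S -> w \in S -> w \in tverts T -> f \in tverts T -> w \notin D -> f \in D ->
  exists y' f', [/\ y' \notin D, f' \in D, f' \in tverts T, y' \in NT S T f' &
     exists om, walk e (~: D) w y' om /\ wlen wt om <= dep wt T w + dep wt T f].
Proof.
move=> HrS HwS Hwt Hft HwD HfD.
have [hw Hsw] := height Hwt; have [hf Hsf] := height Hft.
have dw := dep_eq Hsw; have df := dep_eq Hsf.
have [Hf0 _ _] := up_le Hft Hsf (leqnn hf).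
case: (pselect (exists m, (m <= hw)%N && (iter m par w \in D))) => [Hex|Hno].
  case/ex_minnP: Hex => s /andP [Hs HsD] Hmin.
  case: s Hs HsD Hmin => [|s1] Hs HsD Hmin; first by rewrite /= (negbTE HwD) in HsD.
  have Hs1 : (s1 < hw)%N by [].
  have Hnot : forall m, (m <= s1)%N -> iter m par w \notin D.
    move=> m Hm; apply/negP => HmD.
    by have := Hmin m; rewrite HmD andbT => /(_ (leq_trans Hm (ltnW Hs1))); lia.
  have Hy't : iter s1 par w \in tverts T by apply: iter_in.
  exists (iter s1 par w), (iter s1.+1 par w); split.
  - exact: Hnot.
  - exact: HsD.
  - exact: iter_in.
  - rewrite /NT inE; apply/orP; right; rewrite inE; apply/and4P; split => //.
    + by rewrite T_root (hspec_in _ Hsw).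
    rewrite /trunk Hy't /=; apply/existsP; exists w; apply/existsP; exists r.
    rewrite HwS HrS Hwt T_rin /=; apply/andP; split.
      apply/orP; left; apply/existsP.
      have [Hhw _ _] := Hsw.
      by exists (Ordinal (ltn_trans Hs1 Hhw)); rewrite /= eqxx.
    apply/forallP => c; apply/implyP => /andP [_ /existsP [m /eqP Hm]].
    rewrite iter_r in Hm; subst c.
    have [hy [Hhy Hy _]] := height Hy't.
    by apply/existsP; exists (Ordinal Hhy); rewrite /= Hy.
  exists (upw par w s1); split.
    apply: upT_walk => // m Hm; last by rewrite inE; apply: Hnot.
    by rewrite (hspec_in _ Hsw); lia.
  have [_ H1 _] := up_le Hwt Hsw (ltnW Hs1).
  by rewrite dw df; lra.
have HrD : r \notin D.
  have [_ Hh _] := Hsw; apply/negP => Hr; apply: Hno; exists hw.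
  by rewrite leqnn Hh.
have : exists m, (m <= hf)%N && (iter m par f \in D) by exists 0%N; rewrite HfD.
move=> Hex; have Hbd : forall m, (m <= hf)%N && (iter m par f \in D) -> (m <= hf)%N.
  by move=> m /andP [].
case: (ex_maxnP Hex Hbd) => s /andP [Hs HsD] Hmax.
have Hs' : (s < hf)%N.
  rewrite ltn_neqAle Hs andbT; apply/negP => /eqP Es; subst s.
  by have [_ Hh _] := Hsf; rewrite Hh (negbTE HrD) in HsD.
have Hnot : forall m, (s < m <= hf)%N -> iter m par f \notin D.
  move=> m /andP [Hm1 Hm2]; apply/negP => HmD.
  by have := Hmax m; rewrite Hm2 HmD => /(_ isT); lia.
exists (iter s.+1 par f), (iter s par f); split.
- by apply: Hnot; rewrite leqnn Hs'.
- exact: HsD.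
- exact: iter_in.
- rewrite /NT inE; apply/orP; left; rewrite inE; apply/andP; split.
    by rewrite T_root (hspec_in _ Hsf).
  by rewrite ?iterS eqxx.
have W1 : walk e (~: D) w r (upw par w hw).
  have [_ Hh _] := Hsw; rewrite -{1}Hh.
  apply: upT_walk => // m Hm; first by rewrite (hspec_in _ Hsw).
  by rewrite inE; apply/negP => HmD; apply: Hno; exists m; rewrite Hm HmD.
have W2 : walk e (~: D) (iter s.+1 par f) r (upw par (iter s.+1 par f) (hf - s.+1)).
  have [_ Hh _] := Hsf; rewrite -{1}Hh.
  have -> : iter hf par f = iter (hf - s.+1) par (iter s.+1 par f) by rewrite -iterD subnK.
  apply: upT_walk; first exact: iter_in.
    by move=> m Hm; rewrite -iterD (hspec_in _ Hsf); lia.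
  by move=> m Hm; rewrite -iterD inE; apply: Hnot; lia.
exists (upw par w hw ++ behead (rev (upw par (iter s.+1 par f) (hf - s.+1)))); split.
  exact: walk_glue W1 (walk_rev Hsym W2).
rewrite (wlen_glue_walk wt W1 (walk_rev Hsym W2)) (wlen_rev Hw_sym).
have [_ _ H3] := up_le Hft Hsf Hs'.
by rewrite dw df; lra.
Qed.

End Tree.

Lemma e_lt3 (R : realType) : expR 1 < 3 :> R.
Proof.
set y := expR (6%:R^-1 : R).
have Hy0 : 0 < y by apply: expR_gt0.
have Hz : 1 - 6%:R^-1 <= expR (- 6%:R^-1 : R) by apply: expR_ge1Dx.
have Hyz : y * expR (- 6%:R^-1 : R) = 1 by apply: expRxMexpNx_1.
have Hy : y <= 6 / 5.
  have H6 : (6%:R^-1 : R) = 1 / 6 by rewrite div1r.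
  rewrite H6 in Hz Hyz; nra.
have -> : (1 : R) = 6%:R * 6%:R^-1 by rewrite mulfV.
rewrite expRM_natl -/y.
have Hy3 : y ^+ 3 <= 216 / 125.
  rewrite !exprS expr0 mulr1.
  have Hy2 : y * y <= 36 / 25 by nra.
  nra.
have Hy30 : 0 <= y ^+ 3 by apply: exprn_ge0; apply: ltW.
have -> : y ^+ 6 = y ^+ 3 * y ^+ 3 by rewrite -exprD.
nra.
Qed.

Lemma kk_gt1 (R : realType) (V : finType) : (3 <= #|V|)%N -> 1 < kk R V.
Proof.
move=> Hn; rewrite /kk /nV.
have H3 : (3 : R) <= (#|V|)%:R by rewrite (ler_nat R 3).
have H1 : ln (expR 1) < ln (3 : R) by rewrite ltr_ln ?posrE ?expR_gt0 // e_lt3.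
rewrite expRK in H1; apply: (lt_le_trans H1).
by rewrite ler_ln ?posrE //; apply: (@lt_le_trans _ _ 3).
Qed.

Lemma floor_close (R : realType) (eta A B : R) : 0 < eta -> 0 < A -> 0 < B ->
  Num.floor (logb eta A) = Num.floor (logb eta B) -> B < (1 + eta) * A.
Proof.
move=> He HA HB Hf.
have Hc : 0 < ln (1 + eta) by apply: ln_gt0; lra.
have [HA1 HA2] := andP (floor_itv (logb eta A)).
have [HB1 HB2] := andP (floor_itv (logb eta B)).
rewrite Hf intrD in HA1 HA2; rewrite intrD in HB2.
have Hd : logb eta B < logb eta A + 1 by lra.
rewrite /logb in Hd.
have Hd' : ln B < ln A + ln (1 + eta).
  have := Hd; rewrite -(ltr_pM2r Hc) mulrDl divfK ?gt_eqF // divfK ?gt_eqF //; lra.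
rewrite -lnM ?posrE // in Hd'; last lra.
rewrite mulrC; rewrite ltr_ln ?posrE // in Hd'; apply: mulr_gt0 => //; lra.
Qed.

Lemma glue_pieces (T : Type) (s : seq T) a m b : (a <= m <= b)%N ->
  take (b - a).+1 (drop a s) = take (m - a).+1 (drop a s) ++ behead (take (b - m).+1 (drop m s)).
Proof.
move=> /andP [H1 H2].
have -> : drop m s = drop (m - a) (drop a s) by rewrite drop_drop subnK.
set s' := drop a s.
have -> : behead (take (b - m).+1 (drop (m - a) s')) = take (b - m) (drop (m - a).+1 s').
  have E1 : forall (t : seq T) k, behead (take k.+1 t) = take k (behead t) by move=> [|z t] k.
  by rewrite E1 -drop1 drop_drop add1n.
by rewrite -takeD; congr take; lia.
Qed.

Lemma piece_le (R : realType) (V : finType) (e : rel V) (wt : V -> V -> R)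
  (Hw : forall x y, e x y -> 1 <= wt x y) (Hw_sym : forall x y, wt x y = wt y x)
  (X : {set V}) x y s a b : walk e X x y s -> (a <= b < size s)%N ->
  0 <= wlen wt (take (b - a).+1 (drop a s)) <= wlen wt s.
Proof.
move=> Hs Hab.
have W := walk_sub Hs Hab.
have [_ H0] := walk_wlen Hw W.
have [/andP [Ha Hb]] : (a <= b < size s)%N /\ True by [].
have W1 := walk_sub Hs (a := 0) (b := a).
have W2 := walk_sub Hs (a := b) (b := (size s).-1).
have Hc1 : (0 <= a < size s)%N by set n := size s in Hb *; apply/andP; split; lia.
have Hc2 : (b <= (size s).-1 < size s)%N by set n := size s in Hb *; apply/andP; split; lia.
have [_ H1] := walk_wlen Hw (W1 Hc1).
have [_ H2] := walk_wlen Hw (W2 Hc2).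
rewrite (wlen_split wt (s := s) (t := a)); last by apply: leq_ltn_trans Hb.
rewrite (wlen_split wt (s := drop a s) (t := b - a)); last by rewrite size_drop; set n := size s in Hb *; lia.
rewrite drop_drop subnK //.
rewrite subn0 drop0 in H1.
rewrite take_oversize in H2; last by rewrite size_drop; set n := size s in Hb *; lia.
move=> _; apply/andP; split => //; lra.
Qed.

Section Seg.
Variables (R : realType) (V : finType) (e : rel V) (wt : V -> V -> R).
Hypothesis Hw : forall x y, e x y -> 1 <= wt x y.
Hypothesis Hw_sym : forall x y, wt x y = wt y x.
Variables (X : {set V}) (x y : V) (P : seq V).
Hypothesis HP : walk e X x y P.

Lemma lenAB t : (t < size P)%N -> lenA wt P t + lenB wt P t = wlen wt P.
Proof. by move=> Ht; rewrite /lenA /lenB -wlen_split. Qed.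

Lemma lenA_mono t1 t2 : (t1 <= t2 < size P)%N -> lenA wt P t1 <= lenA wt P t2.
Proof.
move=> H; have /andP [H0 _] := piece_le Hw Hw_sym HP H.
rewrite wlen_piece // in H0; rewrite /lenA; lra.
Qed.

Lemma lenA_ge1 t : (0 < t < size P)%N -> 1 <= lenA wt P t.
Proof.
move=> /andP [H1 H2].
have Hc : (0 <= t < size P)%N by rewrite H2.
have [H _] := walk_wlen Hw (walk_sub HP Hc).
rewrite subn0 drop0 size_takel in H; last exact: H2.
rewrite /lenA; have : 2%:R <= t.+1%:R :> R by rewrite ler_nat.
lra.
Qed.

Lemma lenB_ge1 t : (t < (size P).-1)%N -> 1 <= lenB wt P t.
Proof.
move=> H2.
have Hc : (t <= (size P).-1 < size P)%N.
  by apply/andP; split; set n := size P in H2 *; lia.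
have [H _] := walk_wlen Hw (walk_sub HP Hc).
rewrite take_oversize in H; last by rewrite size_drop; set n := size P in H2 *; lia.
rewrite size_drop in H.
rewrite /lenB; have : 2%:R <= (size P - t)%:R :> R by rewrite ler_nat; set n := size P in H2 *; lia.
lra.
Qed.

Lemma seg_bound eta i j : 0 < eta -> same_seg wt eta P i j -> (i <= j)%N ->
  exists L, [/\ 0 < L, lenA wt P j - lenA wt P i < eta * L &
    forall t, (i <= t <= j)%N -> L <= lenA wt P t /\ L <= lenB wt P t].
Proof.
move=> He [Hi0 Hi Hj0 Hj Hc] Hij.
have Hsz : forall t, (t < (size P).-1)%N -> (t < size P)%N.
  by move=> t; set n := size P; lia.
have Ai := lenA_ge1 (t := i) ltac:(by rewrite Hi0 Hsz).
have Aj := lenA_ge1 (t := j) ltac:(by rewrite Hj0 Hsz).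
have Bi := lenB_ge1 Hi; have Bj := lenB_ge1 Hj.
have ABi := lenAB (Hsz _ Hi); have ABj := lenAB (Hsz _ Hj).
have Mij := lenA_mono (t1 := i) (t2 := j) ltac:(by rewrite Hij Hsz).
case: Hc => [[HAi [HAj Hf]] | [HBi [HBj Hf]]].
  have := floor_close He (lt_le_trans ltr01 Ai) (lt_le_trans ltr01 Aj) Hf => Hcl.
  exists (lenA wt P i); split; first lra; first lra.
  move=> t /andP [Ht1 Ht2].
  have Ht : (t < size P)%N by apply: leq_ltn_trans Ht2 (Hsz _ Hj).
  have M1 := lenA_mono (t1 := i) (t2 := t) ltac:(by rewrite Ht1 Ht).
  have M2 := lenA_mono (t1 := t) (t2 := j) ltac:(by rewrite Ht2 Hsz).
  have := lenAB Ht; split; lra.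
have := floor_close He (lt_le_trans ltr01 Bj) (lt_le_trans ltr01 Bi) (esym Hf) => Hcl.
exists (lenB wt P j); split; first lra; first lra.
move=> t /andP [Ht1 Ht2].
have Ht : (t < size P)%N by apply: leq_ltn_trans Ht2 (Hsz _ Hj).
have M1 := lenA_mono (t1 := i) (t2 := t) ltac:(by rewrite Ht1 Ht).
have M2 := lenA_mono (t1 := t) (t2 := j) ltac:(by rewrite Ht2 Hsz).
have := lenAB Ht; split; lra.
Qed.

End Seg.

Unset Implicit Arguments. Set Strict Implicit. Set Printing Implicit Defensive.

Lemma head_in (V : eqType) (s : seq V) z : s != [::] -> head z s \in s.
Proof. by case: s => // y s _; rewrite mem_head. Qed.

Lemma last_nonnil (V : eqType) (s : seq V) (a b : V) : s != [::] -> last a s = last b s.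
Proof. by case: s. Qed.

Lemma head_nonnil (V : eqType) (s : seq V) (a b : V) : s != [::] -> head a s = head b s.
Proof. by case: s. Qed.

Theorem theorem4p9
  (R : realType) (V : finType) (e : rel V) (wt : V -> V -> R) (W : R)
  (Hn : (3 <= #|V|)%N)
  (He_sym : symmetric e) (He_irr : irreflexive e)
  (Hw_sym : forall x y, wt x y = wt y x)
  (Hw : forall x y, e x y -> 1 <= wt x y <= W)
  (Huniq : forall (X : {set V}) (F : rel V), symmetric F -> subrel F e ->
     forall x y p q, is_sp wt F X x y p -> is_sp wt F X x y q -> p = q)
  (d : nat) (Hd : (2 <= d)%N) (c : R) (Hc : 1 <= c)
  (TCR : {set V} -> {set V} -> V -> rtree V)
  (HTC : forall Rm S : {set V}, tree_cover e wt Rm (S :\: Rm) (TCR Rm S))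
  (D : {set V}) (HD : (#|D| <= d)%N)
  (Us : seq {set V}) (HUs : hier_path (s_par V d c) d TCR Us)
  (HDdeg : forall f, f \in D -> forall j, (j < size Us)%N ->
     forall r, r \in Sj Us j ->
       ((pdeg (Sj Us j) (Tj TCR Us j r) f)%:R <= s_par V d c :> R))
  (s0 t0 : V) (Hs0 : s0 \notin D) (Ht0 : t0 \notin D)
  (eps : R) (Heps : 0 < eps)
  (u v x : V) (Hu : u \notin D) (Hv : v \notin D) (Hx : x \notin D)
  (p1 p2 : seq V)
  (Hp1 : is_sp wt e (~: D) u v p1) (Hp2 : is_sp wt e (~: D) v x p2) :
  let eps1 := eps / (2 + eps) in
  let eps5 := eps1 / (4 * kk R V - 2) in
  let P := p1 ++ behead p2 in
  far_away e wt eps1 (VH TCR Us D s0 t0) D P ->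
  seg_bipath e wt eps5 Us P.
Proof.
move=> eps1 eps5 P Hfar x0 i j Hseg Hmax.
have Hw' : forall x y, e x y -> 1 <= wt x y by move=> a b /Hw /andP [].
have Hk1 := kk_gt1 R Hn.

have He1 : 0 < eps1 by apply: divr_gt0 => //; lra.
have H4k : 0 < 4 * kk R V - 2 by lra.
have He5 : 0 < eps5 by apply: divr_gt0.
have He5e : (4 * kk R V - 2) * eps5 = eps1 by rewrite /eps5 mulrC divfK // gt_eqF.
have [Hp1w Hp1m] := Hp1; have [Hp2w Hp2m] := Hp2.
have HPw : walk e (~: D) u x P := walk_glue Hp1w Hp2w.
have Hij : (i <= j)%N by have /andP [] := Hmax j Hseg.
have [L [HL0 HLseg HLt]] := seg_bound Hw' Hw_sym HPw He5 Hseg Hij.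
have [Hi0 Hi Hj0 Hj _] := Hseg.
have /walkE [Hp10 Hp1h Hp1l _ Hp1s] := Hp1w.
have /walkE [Hp20 Hp2h Hp2l _ Hp2s] := Hp2w.
have /walkE [HPn0 HPh HPl HPe HPs] := HPw.
set n1 := (size p1).-1.
have Hsp1 : size p1 = n1.+1 by rewrite /n1; case: (p1) Hp10.
have Hsp2 : (0 < size p2)%N by case: (p2) Hp20.
have HszP : size P = (n1 + size p2)%N.
  by rewrite /P size_cat size_behead Hsp1; move: Hsp2; clear; lia.
have HPd : forall t, (t < size P)%N -> nth u P t = nth x0 P t.
  by move=> t Ht; apply: set_nth_default.
have HPnth1 : forall t, (t <= n1)%N -> nth x0 P t = nth x0 p1 t.
  by move=> t Ht; rewrite /P nth_cat Hsp1 ltnS Ht.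
have Hv1 : nth x0 p1 n1 = v by rewrite (nth_lastD x0 u Hp10) Hp1l.
have Hv2 : nth x0 p2 0 = v by rewrite nth0 (@head_nonnil _ _ x0 v Hp20) Hp2h.
have HPnth2 : forall t, (n1 <= t)%N -> nth x0 P t = nth x0 p2 (t - n1).
  move=> t Ht; case: (eqVneq t n1) => [->|Hne].
    by rewrite HPnth1 // subnn Hv1 Hv2.
  rewrite /P nth_cat Hsp1.
  have -> : (t < n1.+1)%N = false by move: Ht Hne; clear; lia.
  rewrite /= nth_behead; congr nth; move: Ht Hne; clear; lia.
have Hglue : P = take n1 p1 ++ p2.
  have Ed : drop n1 p1 = [:: v].
    have Hs : size (drop n1 p1) = 1%N by rewrite size_drop Hsp1; clear; lia.
    case E: (drop n1 p1) Hs => [|z [|z' t]] // _.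
    by have := Hv1; rewrite -(addn0 n1) -nth_drop E /= => ->.
  have Ep2 : p2 = v :: behead p2 by case: (p2) Hp20 Hp2h => // z t _ /= ->.
  by rewrite /P -{1}(cat_take_drop n1 p1) Ed -catA cat1s -Ep2.
have HPpiece1 : forall a b, (a <= b <= n1)%N ->
    take (b - a).+1 (drop a P) = take (b - a).+1 (drop a p1).
  move=> a b /andP [Hab Hb]; rewrite /P drop_cat Hsp1 ltnS.
  have -> : (a <= n1)%N by move: Hab Hb; clear; lia.
  by rewrite takel_cat // size_drop Hsp1; move: Hab Hb; clear; lia.
have HPpiece2 : forall a b, (n1 <= a)%N ->
    take (b - a).+1 (drop a P) = take (b - a).+1 (drop (a - n1) p2).
  move=> a b Ha; rewrite Hglue drop_cat size_takel; last by rewrite Hsp1.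
  by rewrite ltnNge Ha.
have HP0 : nth x0 P 0 = u by rewrite HPnth1 // nth0 (@head_nonnil _ _ x0 u Hp10) Hp1h.
have HPL : last x0 P = x by rewrite (@last_nonnil _ _ x0 u HPn0) HPl.
have G1 : forall t, (0 < t <= n1)%N -> nth x0 P t != u.
  move=> t /andP [Hta Ht1]; rewrite HPnth1 //; apply/negP => /eqP Eu.
  have Hcc : (t <= n1 < size p1)%N by rewrite Ht1 Hsp1 /=.
  have Wk := walk_sub Hp1w Hcc.
  rewrite take_oversize in Wk; last by rewrite size_drop Hsp1; move: Ht1; clear; lia.
  rewrite (set_nth_default x0) ?Hsp1 // Eu in Wk; rewrite (set_nth_default x0) ?Hsp1 // Hv1 in Wk.
  have H1 := Hp1m _ Wk.
  have Hc0 : (0 <= t < size p1)%N by rewrite Hsp1 ltnS Ht1.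
  have [H2 _] := walk_wlen Hw' (walk_sub Hp1w Hc0).
  rewrite subn0 drop0 size_takel in H2; last by rewrite Hsp1; move: Ht1; clear; lia.
  have H3 : (2%:R : R) <= t.+1%:R by rewrite ler_nat; move: Hta; clear; lia.
  rewrite (wlen_split wt (t := t)) in H1; last by rewrite Hsp1 ltnS.
  move: H1 H2 H3; clear; lra.
have G2 : forall t, (n1 <= t)%N -> (t < (size P).-1)%N -> nth x0 P t != x.
  move=> t Ht1 Ht2; rewrite HPnth2 //; apply/negP => /eqP Ex.
  set q := (t - n1)%N.
  have Hq : (q < (size p2).-1)%N by rewrite /q; move: Ht1 Ht2; rewrite HszP; clear; lia.
  have Hcc : (0 <= q < size p2)%N by move: Hq; clear; lia.
  have Wk := walk_sub Hp2w Hcc.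
  rewrite subn0 drop0 (set_nth_default x0) ?Hv2 in Wk; last by move: Hq; clear; lia.
  rewrite (set_nth_default x0) ?Ex in Wk; last by move: Hq; clear; lia.
  have H1 := Hp2m _ Wk.
  have Hc2 : (q <= (size p2).-1 < size p2)%N by move: Hq; clear; lia.
  have [H2 _] := walk_wlen Hw' (walk_sub Hp2w Hc2).
  rewrite take_oversize in H2; last by rewrite size_drop; move: Hq; clear; lia.
  rewrite size_drop in H2.
  have H3 : (2%:R : R) <= (size p2 - q)%:R by rewrite ler_nat; move: Hq; clear; lia.
  rewrite (wlen_split wt (t := q)) in H1; last by move: Hq; clear; lia.
  move: H1 H2 H3; clear; lra.
have G3 : forall t, (t.+1 < size P)%N -> nth x0 P t != nth x0 P t.+1.
  move=> t Ht; apply/negP => /eqP E; have := HPe x0 t Ht; rewrite E.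
  by rewrite He_irr.
have good : forall a b, (i <= a)%N -> (a < b)%N -> (b <= j)%N ->
    exists t, [/\ (a <= t <= b)%N, nth x0 P t != u & nth x0 P t != x].
  move=> a b Ha Hab Hb.
  have HbP : (b < (size P).-1)%N by move: Hb Hj; clear; lia.
  have G3a : nth x0 P a != nth x0 P a.+1 by apply: G3; move: Hab HbP; clear; lia.
  case: (leqP a.+1 n1) => Han.
    have U0 : nth x0 P a != u by apply: G1; move: Ha Hi0 Han; clear; lia.
    have U1 : nth x0 P a.+1 != u by apply: G1; move: Ha Hi0 Han; clear; lia.
    case: (eqVneq (nth x0 P a) x) => Hax.
      exists a.+1; split => //; first by move: Hab; clear; lia.
      by rewrite -Hax eq_sym.
    by exists a; split => //; move: Hab; clear; lia.
  have X0 : nth x0 P a != x by apply: G2; move: Han HbP Hab; clear; lia.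
  have X1 : nth x0 P a.+1 != x by apply: G2; move: Han HbP Hab; clear; lia.
  case: (eqVneq (nth x0 P a) u) => Hau.
    exists a.+1; split => //; first by move: Hab; clear; lia.
    by rewrite -Hau eq_sym.
  by exists a; split => //; move: Hab; clear; lia.
have [HUs0 HUs1 _] := HUs.
have HsU : (0 < size Us)%N by case: (Us) HUs0.
have GsetT : forall z, z \in Gset Us (size Us).
  move=> z; rewrite /Gset inE; apply/forallP => jj; apply/implyP => H.
  by move: (ltn_ord jj); rewrite ltnNge H.
have Gset0 : forall z, z \notin Gset Us 0.
  move=> z; rewrite /Gset inE negb_forall; apply/existsP; exists (Ordinal HsU).
  by rewrite /= HUs1 inE.
have GsetC : forall l z, z \in Gset Us l -> z \notin nth finset.set0 Us l.
  move=> l z; rewrite /Gset inE => /forallP H.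
  case: (ltnP l (size Us)) => Hl.
    by have := H (Ordinal Hl); rewrite /= leqnn.
  by rewrite nth_default // inE.
have Gset_in : forall l z, z \notin Gset Us l -> exists2 jj, (l <= jj < size Us)%N & z \in nth finset.set0 Us jj.
  move=> l z; rewrite /Gset inE negb_forall => /existsP [jj].
  rewrite negb_imply negbK => /andP [H1 H2]; exists jj => //.
  by rewrite H1 ltn_ord.
have piece_sp : forall a b, (i <= a)%N -> (a <= b)%N -> (b <= j)%N ->
    (b <= n1)%N \/ (n1 <= a)%N ->
    exists l, (1 <= l <= size Us)%N /\
      is_sp wt e (Gset Us l) (nth x0 P a) (nth x0 P b) (take (b - a).+1 (drop a P)).
  move=> a b Hia Hab Hbj Hside.
  have HbP : (b < size P)%N by move: Hbj Hj; clear; lia.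
  have HaP : (a < size P)%N by move: Hab HbP; clear; lia.
  have Hcab : (a <= b < size P)%N by rewrite Hab HbP.
  set Q := take (b - a).+1 (drop a P).
  have HQw : walk e (~: D) (nth x0 P a) (nth x0 P b) Q.
    by have := walk_sub HPw Hcab; rewrite !HPd.
  have HQopt : forall q, walk e (~: D) (nth x0 P a) (nth x0 P b) q -> wlen wt Q <= wlen wt q.
    move=> q Hq; case: Hside => Hs.
      have Hc1 : (a <= b < size p1)%N by rewrite Hab Hsp1 ltnS.
      rewrite /Q HPpiece1 ?Hab //; apply: (sp_sub Hp1 Hc1).
      rewrite !(set_nth_default x0) ?Hsp1 ?ltnS //; last by move: Hab Hs; clear; lia.
      by rewrite -!HPnth1 //; move: Hab Hs; clear; lia.
    have Hc2 : (a - n1 <= b - n1 < size p2)%N.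
      by move: Hab Hs HbP; rewrite HszP; clear; lia.
    rewrite /Q HPpiece2 //.
    have -> : (b - a = (b - n1) - (a - n1))%N by move: Hab Hs; clear; lia.
    apply: (sp_sub Hp2 Hc2).
    rewrite !(set_nth_default x0); first last.
    - by move: Hab Hs HbP; rewrite HszP; clear; lia.
    - by move: Hab Hs HbP; rewrite HszP; clear; lia.
    by rewrite -!HPnth2 //; move: Hab Hs; clear; lia.
  have HQlen : wlen wt Q = lenA wt P b - lenA wt P a by rewrite /Q wlen_piece.
  have HQS : wlen wt Q < eps5 * L.
    have M1 := lenA_mono Hw' Hw_sym HPw (t1 := i) (t2 := a) ltac:(by rewrite Hia HaP).
    have M2 := lenA_mono Hw' Hw_sym HPw (t1 := b) (t2 := j) ltac:(by rewrite Hbj; move: Hj; clear; lia).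
    by move: HQlen M1 M2 HLseg; clear; lra.
  have HQ0 : Q != [::] by have /walkE [] := HQw.
  have HaQ : nth x0 P a \in Q by have /walkE [_ Hh _ _ _] := HQw; rewrite -Hh head_in.
  have HQD : {subset Q <= ~: D} by have /walkE [] := HQw.
  have Hex : exists l, all (fun z => z \in Gset Us l) Q.
    by exists (size Us); apply/allP => z _; apply: GsetT.
  case/ex_minnP: Hex => l Hl Hlmin.
  have HlU : (l <= size Us)%N by apply: Hlmin; apply/allP => z _; apply: GsetT.
  case: l Hl Hlmin HlU => [|l'] Hl Hlmin HlU.
    by exfalso; move/allP: Hl => /(_ _ HaQ); rewrite (negbTE (Gset0 _)).
  have Hnot : ~~ all (fun z => z \in Gset Us l') Q.
    by apply/negP => /Hlmin; rewrite ltnn.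
  case/allPn: Hnot => w HwQ Hwn.
  have HwG : w \in Gset Us l'.+1 by move/allP: Hl => /(_ _ HwQ).
  have Hwl : w \notin nth finset.set0 Us l'.+1 by apply: GsetC.
  have Hwl' : w \in nth finset.set0 Us l'.
    have [jj /andP [Hj1 Hj2] Hwj] := Gset_in _ _ Hwn.
    case: (eqVneq jj l') => [<- //|Hne].
    move: HwG; rewrite /Gset inE => /forallP /(_ (Ordinal Hj2)) /=.
    have -> : (l'.+1 <= jj)%N by move: Hj1 Hne; clear; lia.
    by rewrite Hwj.
  have HwS : w \in Sj Us l' by rewrite /Sj inE Hwl Hwl'.
  have HwD : w \notin D by have := HQD _ HwQ; rewrite inE.
  have Hl'U : (l' < size Us)%N by [].
  have HGsub : {subset Gset Us l'.+1 <= ~: nth finset.set0 Us l'.+1}.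
    by move=> z Hz; rewrite inE; apply: GsetC.
  have HQg : walk e (Gset Us l'.+1) (nth x0 P a) (nth x0 P b) Q.
    have /walkE [H1 H2 H3 H4 _] := HQw; apply/walkE; split => //.
    by move=> z Hz; move/allP: Hl => /(_ _ Hz).
  exists l'.+1; split; first by rewrite HlU.
  split => // q Hq.
  case: (lerP (wlen wt Q) (wlen wt q)) => // Hlt; exfalso.
  case: (pselect (exists2 z, z \in q & z \in D)) => [[f Hfq HfD] | Hnd]; last first.
    have Hq' : walk e (~: D) (nth x0 P a) (nth x0 P b) q.
      have /walkE [H1 H2 H3 H4 _] := Hq; apply/walkE; split => //.
      by move=> z Hz; rewrite inE; apply/negP => HzD; apply: Hnd; exists z.
    by have := HQopt _ Hq'; move: Hlt; clear; lra.
  have /walkE [Hq0 Hqh Hql _ Hqs] := Hq.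
  have HfG : f \in Gset Us l'.+1 by apply: Hqs.
  set kf := index f q.
  have Hkf : (kf < size q)%N by rewrite index_mem.
  have Ef : nth (nth x0 P a) q kf = f by rewrite nth_index.
  have Ha0 : nth (nth x0 P a) q 0 = nth x0 P a by rewrite nth0.
  have Hqlast : nth (nth x0 P a) q (size q).-1 = nth x0 P b by rewrite nth_last.
  have Wq1 : walk e (Gset Us l'.+1) (nth x0 P a) f (take kf.+1 q).
    have Hcc : (0 <= kf < size q)%N by rewrite Hkf.
    by have := walk_sub Hq Hcc; rewrite subn0 drop0 Ha0 Ef.
  have Wq2 : walk e (Gset Us l'.+1) f (nth x0 P b) (drop kf q).
    have Hcc : (kf <= (size q).-1 < size q)%N by move: Hkf; clear; lia.
    have := walk_sub Hq Hcc; rewrite Ef Hqlast take_oversize //.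
    by rewrite size_drop; move: Hkf; clear; lia.
  have Eq : wlen wt q = wlen wt (take kf.+1 q) + wlen wt (drop kf q) by apply: wlen_split.
  set kw := index w Q.
  have Hkw : (kw < size Q)%N by rewrite index_mem.
  have Ew : nth (nth x0 P a) Q kw = w by rewrite nth_index.
  have HQa0 : nth (nth x0 P a) Q 0 = nth x0 P a by rewrite nth0; have /walkE [_ -> _ _ _] := HQw.
  have HQlast : nth (nth x0 P a) Q (size Q).-1 = nth x0 P b.
    by rewrite nth_last; have /walkE [_ _ -> _ _] := HQw.
  have WQ1 : walk e (Gset Us l'.+1) (nth x0 P a) w (take kw.+1 Q).
    have Hcc : (0 <= kw < size Q)%N by rewrite Hkw.
    by have := walk_sub HQg Hcc; rewrite subn0 drop0 HQa0 Ew.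
  have WQ2 : walk e (Gset Us l'.+1) w (nth x0 P b) (drop kw Q).
    have Hcc : (kw <= (size Q).-1 < size Q)%N by move: Hkw; clear; lia.
    have := walk_sub HQg Hcc; rewrite Ew HQlast take_oversize //.
    by rewrite size_drop; move: Hkw; clear; lia.
  have EQ : wlen wt Q = wlen wt (take kw.+1 Q) + wlen wt (drop kw Q) by apply: wlen_split.
  have WR1 := walk_glue (walk_rev He_sym WQ1) Wq1.
  have WR2 := walk_glue WQ2 (walk_rev He_sym Wq2).
  have ER1 := wlen_glue_walk wt (walk_rev He_sym WQ1) Wq1.
  have ER2 := wlen_glue_walk wt WQ2 (walk_rev He_sym Wq2).
  rewrite (wlen_rev Hw_sym) in ER1; rewrite (wlen_rev Hw_sym) in ER2.
  have [rho [Hrho Hrholt]] : exists rho, walk e (Gset Us l'.+1) w f rho /\ wlen wt rho < wlen wt Q.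
    case: (lerP (wlen wt (rev (take kw.+1 Q) ++ behead (take kf.+1 q)))
                (wlen wt (drop kw Q ++ behead (rev (drop kf q))))) => Hcmp.
      exists (rev (take kw.+1 Q) ++ behead (take kf.+1 q)); split => //.
      by move: Hcmp ER1 ER2 EQ Eq Hlt; clear; lra.
    exists (drop kw Q ++ behead (rev (drop kf q))); split => //.
    by move: Hcmp ER1 ER2 EQ Eq Hlt; clear; lra.
  have Hrho' := walk_mono HGsub Hrho.
  have [HS HTv Hcov Hov] := HTC (nth finset.set0 Us l'.+1) (nth finset.set0 Us l').
  have Hfn : f \in ~: nth finset.set0 Us l'.+1 by apply: HGsub.
  have [rt Hrt [Hwt Hft Hdep]] := Hcov w f HwS Hfn (ex_intro _ rho Hrho').
  have [dd0 [Hdd0 Hdd0le]] := exists_dist Hw' Hrho'.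
  have Hdepb := Hdep dd0 Hdd0.
  have HTr := HTv rt Hrt.
  have [y' [f' [Hy'D Hf'D Hf't Hy'N [om [Hom Homl]]]]] :=
    tree_exit Hw' HTr He_sym Hw_sym Hrt HwS Hwt Hft HwD HfD.
  have Hab' : (a < b)%N.
    case: (ltnP a b) => // Hba.
    have Eab : b = a by move: Hab Hba; clear; lia.
    have [_ Hq0'] := walk_wlen Hw' Hq.
    by move: Hlt; rewrite HQlen Eab subrr; move: Hq0'; clear; lra.
  have [t [Htab HtU HtX]] := good a b Hia Hab' Hbj.
  have HszQ : size Q = (b - a).+1.
    rewrite /Q size_takel //; rewrite size_drop; move: HbP Hab; clear; lia.
  have Hkt : (t - a < size Q)%N by rewrite HszQ; move: Htab; clear; lia.
  have HtQ : nth (nth x0 P a) Q (t - a) = nth x0 P t.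
    rewrite /Q nth_take; last by move: Htab; clear; lia.
    rewrite nth_drop subnKC; last by move: Htab; clear; lia.
    apply: set_nth_default; move: Htab HbP; clear; lia.
  have [sig [Hsig Hsigl]] : exists sig, walk e (~: D) (nth x0 P t) w sig /\ wlen wt sig <= wlen wt Q.
    case: (leqP (t - a) kw) => Hcmp2.
      have Hcc : (t - a <= kw < size Q)%N by rewrite Hcmp2 Hkw.
      exists (take (kw - (t - a)).+1 (drop (t - a) Q)); split.
        by have := walk_sub HQw Hcc; rewrite HtQ Ew.
      by have /andP [] := piece_le Hw' Hw_sym HQw Hcc.
    have Hcc : (kw <= t - a < size Q)%N by rewrite (ltnW Hcmp2) Hkt.
    exists (rev (take (t - a - kw).+1 (drop kw Q))); split.
      by apply: walk_rev => //; have := walk_sub HQw Hcc; rewrite HtQ Ew.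
    by rewrite (wlen_rev Hw_sym); have /andP [] := piece_le Hw' Hw_sym HQw Hcc.
  have Htau := walk_glue Hsig Hom.
  have Etau := wlen_glue_walk wt Hsig Hom.
  have [dd [Hdd Hddle]] := exists_dist Hw' Htau.
  have Ht0' : (0 < t)%N by move: Hi0 Hia Htab; clear; lia.
  have Ht1' : (t < (size P).-1)%N by move: Hj Hbj Htab; clear; lia.
  have HtU' : nth x0 P t != nth x0 P 0 by rewrite HP0.
  have HtX' : nth x0 P t != last x0 P by rewrite HPL.
  have Hy'VH : y' \in VH TCR Us D s0 t0.
    rewrite /VH inE Hy'D /= inE; apply/orP; right; rewrite inE.
    apply/existsP; exists f'; rewrite Hf'D /=.
    apply/existsP; exists (Ordinal Hl'U); apply/existsP; exists rt.
    by rewrite /= Hrt Hf't Hy'N.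
  apply: (Hfar x0 t Ht0' Ht1' HtU' HtX' y' Hy'VH); exists dd; split => //.
  have [HLa HLb] := HLt t ltac:(move: Hia Htab Hbj; clear; lia).
  have HLm : L <= Num.min (lenA wt P t) (lenB wt P t) by rewrite le_min HLa HLb.
  have HK : 1 < kk R V := Hk1.
  set K := kk R V in HK Hdepb He5e H4k.
  set X := wlen wt Q in Hsigl HQS Hrholt Hlt.
  have HX0 : 0 <= X by have [_] := walk_wlen Hw' HQw.
  have C1 : (2 * K - 1) * dd0 <= (2 * K - 1) * X.
    apply: ler_wpM2l; first by move: HK; clear; lra.
    by move: Hdd0le Hrholt; clear; lra.
  have C2 : (2 * K - 1) * X + X <= (4 * K - 2) * X.
    have : 0 <= (2 * K - 2) * X by apply: mulr_ge0 => //; move: HK; clear; lra.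
    by clear -HX0; nra.
  have C3 : (4 * K - 2) * X <= (4 * K - 2) * (eps5 * L).
    by apply: ler_wpM2l; [move: H4k; clear; lra | move: HQS; clear; lra].
  have C4 : (4 * K - 2) * (eps5 * L) = eps1 * L by rewrite mulrA He5e.
  have C5 : eps1 * L <= eps1 * Num.min (lenA wt P t) (lenB wt P t).
    by apply: ler_wpM2l => //; apply: ltW.
  move: Hddle Etau Hsigl Homl Hdepb C1 C2 C3 C4 C5; clear; lra.
set m := maxn i (minn n1 j).
have Him : (i <= m <= j)%N by rewrite /m; move: Hij; clear; lia.
have [Him1 Him2] := andP Him.
have [l1 [Hl1 Hs1]] := piece_sp i m (leqnn i) Him1 Him2
  ltac:(rewrite /m; case: (leqP n1 i) => Hc0; [right | left]; move: Hij Hc0; clear; lia).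
have [l2 [Hl2 Hs2]] := piece_sp m j Him1 Him2 (leqnn j)
  ltac:(rewrite /m; case: (leqP j n1) => Hc0; [left | right]; move: Hij Hc0; clear; lia).
exists l1, l2, m; split => //.
exists (take (m - i).+1 (drop i P)), (take (j - m).+1 (drop m P)); split => //.
exact: glue_pieces.
Qed.
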